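(* Let $P$ be a continuous poset, $U\subseteq P$ an up-set and $D\subseteq P$ a down-set. Then (i) $k[U]$ is lower semi-continuous iff $U$ is Scott-open; (ii) $k[D]$ is lower semi-continuous iff $D$ is Scott-closed. For $P=\mathbb R^n$ with componentwise order one also has: (iii) $k[U]$ is upper semi-continuous iff $U$ is closed in the standard topology; (iv) $k[D]$ is upper semi-continuous iff $D$ is open in the standard topology.
   Context: Let $P$ be a poset. A subset is directed if nonempty and any two elements have an upper bound in it. $x\ll y$ means: for every directed $D$ whose supremum exists with $y\le\sup D$, some $d\in D$ satisfies $x\le d$. $P$ is continuous if for each $p$ the set $\{x:x\ll p\}$ is directed with supremum $p$. A set $U$ is Scott-open if it is an up-set meeting every directed set whose supremum exists and lies in $U$; Scott-closed sets are complements of Scott-open sets. $k$ is a commutative ring with unity; persistence modules are functors from $P$ (as a category) to $k$-modules. For convex $I\subseteq P$, $k[I]$ is the indicator module: $k$ on $I$, $0$ elsewhere, identity maps within $I$, zero otherwise. $\underline M_p=\varprojlim_{x\gg p}M_x$, $\overline M_p=\varinjlim_{x\ll p}M_x$; $M$ is upper (resp. lower) semi-continuous if the canonical morphism $M\to\underline M$ (resp. $\overline M\to M$) is an isomorphism. *)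

(* Defs.v *)
From HB Require Import structures.
From mathcomp Require Import all_boot all_order all_algebra.
From mathcomp Require Import all_classical all_reals all_analysis.
Set Implicit Arguments. Unset Strict Implicit. Unset Printing Implicit Defensive.
Import Order.TTheory GRing.Theory Num.Theory.
Local Open Scope classical_set_scope.
Local Open Scope order_scope.

Section PosetNotions.
Context {disp : Order.disp_t} {P : porderType disp}.

Definition directed (D : set P) : Prop :=
  (exists d, D d) /\
  forall x y, D x -> D y -> exists z, [/\ D z, x <= z & y <= z].

Definition is_sup (D : set P) (s : P) : Prop :=
  (forall d, D d -> d <= s) /\
  (forall u, (forall d, D d -> d <= u) -> s <= u).

Definition way_below (x y : P) : Prop :=
  forall (D : set P) (s : P), directed D -> is_sup D s -> y <= s ->
    exists2 d, D d & x <= d.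

Definition upset (U : set P) : Prop := forall x y, U x -> x <= y -> U y.
Definition downset (D : set P) : Prop := forall x y, D y -> x <= y -> D x.

Definition scott_open (U : set P) : Prop :=
  upset U /\
  forall (D : set P) (s : P), directed D -> is_sup D s -> U s ->
    exists2 d, D d & U d.

Definition scott_closed (C : set P) : Prop := scott_open (~` C).

End PosetNotions.

Definition continuous_poset (disp : Order.disp_t) (P : porderType disp) : Prop :=
  forall p : P, directed [set x | way_below x p] /\ is_sup [set x | way_below x p] p.

Record pmod (k : comNzRingType) (disp : Order.disp_t) (P : porderType disp) := PMod {
  pm_obj :> P -> lmodType k;
  pm_map : forall p q : P, p <= q -> pm_obj p -> pm_obj q
}.
Arguments pm_map {k disp P} _ {p q} _ _.

Definition klinear (k : comNzRingType) (V W : lmodType k) (f : V -> W) : Prop :=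
  forall (a : k) (u v : V), (f (a *: u + v) = a *: f u + f v)%R.

Definition is_pmod k disp (P : porderType disp) (M : pmod k P) : Prop :=
  [/\ forall p q (h : p <= q), klinear (pm_map M h),
      forall p (h : p <= p) v, pm_map M h v = v &
      forall p q r (h1 : p <= q) (h2 : q <= r) (h3 : p <= r) v,
        pm_map M h3 v = pm_map M h2 (pm_map M h1 v)].

(** Lower semi-continuity: for every p, the canonical cocone
    (M_(x<=p) : M_x -> M_p)_(x << p) exhibits M_p as the colimit of the
    diagram (M_x)_(x << p); i.e. the canonical map colim_(x<<p) M_x -> M_p
    is an isomorphism. *)
Definition pm_lower_semicontinuous k disp (P : porderType disp) (M : pmod k P) : Prop :=
  forall p : P, forall (N : lmodType k)
    (f : forall x : P, way_below x p -> M x -> N),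
    (forall x (hx : way_below x p), klinear (f x hx)) ->
    (forall x y (hx : way_below x p) (hy : way_below y p) (hxy : x <= y) v,
        f y hy (pm_map M hxy v) = f x hx v) ->
    exists g : M p -> N,
      [/\ klinear g,
          (forall x (hx : way_below x p) (hxp : x <= p) v,
              g (pm_map M hxp v) = f x hx v) &
          (forall g' : M p -> N, klinear g' ->
             (forall x (hx : way_below x p) (hxp : x <= p) v,
                 g' (pm_map M hxp v) = f x hx v) ->
             forall v, g' v = g v)].

(** Upper semi-continuity: for every p, the canonical cone
    (M_(p<=x) : M_p -> M_x)_(p << x) exhibits M_p as the limit of the
    diagram (M_x)_(x >> p); i.e. the canonical map M_p -> lim_(x>>p) M_x
    is an isomorphism. *)
Definition pm_upper_semicontinuous k disp (P : porderType disp) (M : pmod k P) : Prop :=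
  forall p : P, forall (N : lmodType k)
    (f : forall x : P, way_below p x -> N -> M x),
    (forall x (hx : way_below p x), klinear (f x hx)) ->
    (forall x y (hx : way_below p x) (hy : way_below p y) (hxy : x <= y) v,
        pm_map M hxy (f x hx v) = f y hy v) ->
    exists g : N -> M p,
      [/\ klinear g,
          (forall x (hx : way_below p x) (hpx : p <= x) v,
              pm_map M hpx (g v) = f x hx v) &
          (forall g' : N -> M p, klinear g' ->
             (forall x (hx : way_below p x) (hpx : p <= x) v,
                 pm_map M hpx (g' v) = f x hx v) ->
             forall v, g' v = g v)].

(** Indicator module k[I]: k (realised as 'rV[k]_1) on I, 0 (= 'rV[k]_0)
    elsewhere; the map for p <= q is the identity k -> k when p, q \in I
    (multiplication by the 1x1 matrix 1) and zero otherwise (the zero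
    module is involved). For convex I this is a functor. *)
Definition indicator_module (k : comNzRingType) disp (P : porderType disp)
    (I : set P) : pmod k P :=
  @PMod k disp P (fun p => 'rV[k]_(`[< I p >] : nat))
    (fun p q _ (v : 'rV[k]_(`[< I p >] : nat)) =>
       (v *m (const_mx 1%R : 'M[k]_(`[< I p >] : nat, `[< I q >] : nat)))%R).

(** R^n with the componentwise order; same carrier as 'rV[R]_n, which
    carries the standard (product/normed) topology. *)
Definition Rn (R : realType) (n : nat) : Type := 'rV[R]_n.
HB.instance Definition _ (R : realType) (n : nat) := Choice.on (Rn R n).

Definition Rn_le (R : realType) (n : nat) (u v : Rn R n) : bool :=
  [forall i, (u ord0 i <= v ord0 i)%R].

Lemma Rn_le_refl (R : realType) (n : nat) : reflexive (@Rn_le R n).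
Proof. by move=> u; apply/forallP => i. Qed.

Lemma Rn_le_anti (R : realType) (n : nat) : antisymmetric (@Rn_le R n).
Proof.
move=> u v /andP[/forallP uv /forallP vu]; apply/matrixP => i j.
by rewrite (ord1 i); apply/eqP; rewrite eq_le uv vu.
Qed.

Lemma Rn_le_trans (R : realType) (n : nat) : transitive (@Rn_le R n).
Proof.
move=> v u w /forallP uv /forallP vw; apply/forallP => i.
exact: le_trans (uv i) (vw i).
Qed.

HB.instance Definition _ (R : realType) (n : nat) :=
  Order.Le_isPOrder.Build Order.default_display (Rn R n)
    (@Rn_le_refl R n) (@Rn_le_anti R n) (@Rn_le_trans R n).

(* Main.v *)
Require Import Defs.
From HB Require Import structures.
From mathcomp Require Import all_boot all_order all_algebra.
From mathcomp Require Import all_classical all_reals all_analysis.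
Import numFieldNormedType.Exports.
Set Implicit Arguments. Unset Strict Implicit. Unset Printing Implicit Defensive.
Import Order.TTheory GRing.Theory Num.Theory.
Local Open Scope classical_set_scope.
Local Open Scope ring_scope.

Section Alg.
Variable k : comNzRingType.

Local Notation Cm b c := (const_mx 1 : 'M[k]_((b : bool) : nat, (c : bool) : nat)).

Lemma rv0 (b : bool) (v : 'rV[k]_(b : nat)) : ~~ b -> v = 0.
Proof. by case: b v => // v _; apply/rowP => -[]. Qed.

Lemma Cm_comp (b c d : bool) (v : 'rV[k]_(b : nat)) : c ->
  v *m Cm b c *m Cm c d = v *m Cm b d.
Proof.
case: c => // _; rewrite -mulmxA; congr (_ *m _).
apply/matrixP => i j; rewrite !mxE big_ord1 !mxE mulr1 //.
Qed.

Lemma Cm_id (b : bool) (v : 'rV[k]_(b : nat)) : v *m Cm b b = v.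
Proof.
case: b v => v; last by apply/rowP => -[].
apply/rowP => j; rewrite !mxE big_ord1 !mxE mulr1 (ord1 j) //.
Qed.

Lemma one_neq0 (b : bool) : b -> (const_mx 1 : 'rV[k]_(b : nat)) != 0.
Proof.
case: b => // _; apply/eqP => /matrixP /(_ 0 0); rewrite !mxE => /eqP.
by rewrite oner_eq0.
Qed.

Lemma kl0 (V W : lmodType k) (f : V -> W) : klinear f -> f 0 = 0.
Proof.
move=> fl; have := fl 1 0 0; rewrite scaler0 add0r scale1r => h.
by apply: (addrI (f 0)); rewrite addr0 -h.
Qed.

Lemma kl_mul (b c : bool) (W : lmodType k) (f : 'rV[k]_(c:nat) -> W) :
  klinear f -> klinear (fun v : 'rV[k]_(b:nat) => f (v *m Cm b c)).
Proof. by move=> fl a u v /=; rewrite mulmxDl -scalemxAl fl. Qed.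

Lemma kl_mulr (b c : bool) (W : lmodType k) (f : W -> 'rV[k]_(b:nat)) :
  klinear f -> klinear (fun v => f v *m Cm b c).
Proof. by move=> fl a u v /=; rewrite fl mulmxDl -scalemxAl. Qed.

Lemma kl_zero (V W : lmodType k) : klinear (fun _ : V => (0 : W)).
Proof. by move=> a u v; rewrite scaler0 addr0. Qed.

Lemma kl_id (V : lmodType k) : klinear (fun v : V => v).
Proof. by []. Qed.

Lemma kl_Cm (b c : bool) : klinear (fun v : 'rV[k]_(b:nat) => v *m Cm b c).
Proof. by move=> a u v; rewrite mulmxDl -scalemxAl. Qed.
Lemma one_mul1 (b : bool) : b -> (const_mx 1 : 'rV[k]_(b:nat)) *m Cm b true != 0.
Proof. by case: b => // _; rewrite Cm_id; apply: one_neq0. Qed.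
Lemma one_mul2 (b : bool) : b -> (const_mx 1 : 'rV[k]_(true:nat)) *m Cm true b != 0.
Proof. by case: b => // _; rewrite Cm_id; apply: one_neq0. Qed.
End Alg.


Section Poset.
Variables (k : comNzRingType) (disp : Order.disp_t) (P : porderType disp).
Local Notation Cm b c := (const_mx 1 : 'M[k]_((b : bool) : nat, (c : bool) : nat)).
Local Notation wb := (@way_below disp P).

Definition lsc_at (M : pmod k P) (p : P) : Prop :=
  forall (N : lmodType k)
    (f : forall x : P, way_below x p -> M x -> N),
    (forall x (hx : way_below x p), klinear (f x hx)) ->
    (forall x y (hx : way_below x p) (hy : way_below y p) (hxy : (x <= y)%O) v,
        f y hy (pm_map M hxy v) = f x hx v) ->
    exists g : M p -> N,
      [/\ klinear g,
          (forall x (hx : way_below x p) (hxp : (x <= p)%O) v,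
              g (pm_map M hxp v) = f x hx v) &
          (forall g' : M p -> N, klinear g' ->
             (forall x (hx : way_below x p) (hxp : (x <= p)%O) v,
                 g' (pm_map M hxp v) = f x hx v) ->
             forall v, g' v = g v)].

Definition usc_at (M : pmod k P) (p : P) : Prop :=
  forall (N : lmodType k)
    (f : forall x : P, way_below p x -> N -> M x),
    (forall x (hx : way_below p x), klinear (f x hx)) ->
    (forall x y (hx : way_below p x) (hy : way_below p y) (hxy : (x <= y)%O) v,
        pm_map M hxy (f x hx v) = f y hy v) ->
    exists g : N -> M p,
      [/\ klinear g,
          (forall x (hx : way_below p x) (hpx : (p <= x)%O) v,
              pm_map M hpx (g v) = f x hx v) &
          (forall g' : N -> M p, klinear g' ->
             (forall x (hx : way_below p x) (hpx : (p <= x)%O) v,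
                 pm_map M hpx (g' v) = f x hx v) ->
             forall v, g' v = g v)].

Lemma lscE (M : pmod k P) : pm_lower_semicontinuous M <-> forall p, lsc_at M p.
Proof. by []. Qed.
Lemma uscE (M : pmod k P) : pm_upper_semicontinuous M <-> forall p, usc_at M p.
Proof. by []. Qed.

Lemma wb_le (x y : P) : wb x y -> (x <= y)%O.
Proof.
move=> h.
have dir : directed [set y].
  split; first by exists y.
  by move=> a b -> ->; exists y; split.
have sup : is_sup [set y] y by split => [d ->|u]; [|apply].
by have [d -> //] := h _ _ dir sup (lexx y).
Qed.

Lemma lsc_pos (I : set P) p (Wdir : directed [set x | wb x p]) x0
  (hx0 : wb x0 p) (Ix0 : I x0) (Ip : I p)
  (Hz : forall z, wb z p -> (x0 <= z)%O -> I z) :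
  lsc_at (indicator_module k I) p.
Proof.
move=> N f fl fc.
have ip : `[< I p >] by apply/asboolP.
have ix0 : `[< I x0 >] by apply/asboolP.
exists (fun v => f x0 hx0 (v *m Cm `[< I p >] `[< I x0 >])); split.
- by move=> a u v /=; rewrite mulmxDl -scalemxAl fl.
- move=> x hx hxp v /=.
  have [_ /(_ x x0 hx hx0) [z [hz hxz hx0z]]] := Wdir.
  rewrite -(fc x z hx hz hxz v) -(fc x0 z hx0 hz hx0z) /=.
  by rewrite !Cm_comp.
- move=> g' g'l g'c v.
  rewrite -[v in g' v]Cm_id -(@Cm_comp _ _ `[< I x0 >]) //.
  exact: (g'c x0 hx0 (wb_le hx0)).
Qed.

Lemma lsc_neg (I : set P) p (Wdir : directed [set x | wb x p]) x1
  (hx1 : wb x1 p) (Ip : ~ I p)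
  (Hz : forall z, wb z p -> (x1 <= z)%O -> ~ I z) :
  lsc_at (indicator_module k I) p.
Proof.
move=> N f fl fc.
exists (fun _ => 0); split.
- exact: kl_zero.
- move=> x hx hxp v.
  have [_ /(_ x x1 hx hx1) [z [hz hxz hx1z]]] := Wdir.
  rewrite -(fc x z hx hz hxz v) /= (rv0 (v *m _)) ?(kl0 (fl _ _)) //.
  by apply/asboolPn; apply: Hz.
- move=> g' g'l g'c v.
  by rewrite (rv0 v) ?(kl0 g'l) //; apply/asboolPn.
Qed.

Lemma lsc_nec1 (I : set P) p : lsc_at (indicator_module k I) p -> I p ->
  exists x, wb x p /\ I x.
Proof.
move=> L Ip; case: (pselect (exists x, wb x p /\ I x)) => // hno.
have ip : `[< I p >] by apply/asboolP.
have [|g [gl gc gu]] := L (indicator_module k I p) (fun x _ _ => 0)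
  (fun x _ => @kl_zero _ _ _).
  by [].
have e1 := gu (fun v => v) (@kl_id _ _).
have e0 := gu (fun _ => 0) (@kl_zero _ _ _).
have c1 : forall x (hx : wb x p) (hxp : (x <= p)%O) (v : indicator_module k I x),
    pm_map (indicator_module k I) hxp v = 0.
  move=> x hx hxp v /=; rewrite (rv0 v) ?mul0mx //.
  by apply/asboolPn => Ix; apply: hno; exists x.
have := e1 c1 (const_mx 1); rewrite -(e0 _ (const_mx 1)) //.
by move/eqP; rewrite (negbTE (@one_neq0 k _ ip)).
Qed.

Lemma lsc_nec2 (I : set P) p : lsc_at (indicator_module k I) p -> ~ I p ->
  (exists x, wb x p) -> exists x, wb x p /\ ~ I x.
Proof.
move=> L Ip [x0 hx0]; case: (pselect (exists x, wb x p /\ ~ I x)) => // hno.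
have hall : forall x, wb x p -> `[< I x >].
  move=> x hx; apply/asboolP; apply: contrapT => Ix; apply: hno; by exists x.
have [|g [gl gc gu]] := L 'rV[k]_(true : nat)
  (fun x _ v => v *m Cm `[< I x >] true) (fun x _ => @kl_Cm _ _ _).
  by move=> x y hx hy hxy v; apply: Cm_comp; apply: hall.
have := gc x0 hx0 (wb_le hx0) (const_mx 1).
rewrite /= (rv0 (_ *m _)) ?(kl0 gl); last by apply/asboolPn.
by move/eqP; rewrite eq_sym (negbTE (@one_mul1 k _ (hall _ hx0))).
Qed.

Lemma usc_pos (I : set P) p
  (Wcod : forall x y, wb p x -> wb p y -> exists z, [/\ wb p z, (z <= x)%O & (z <= y)%O])
  x0 (hx0 : wb p x0) (Ix0 : I x0) (Ip : I p)
  (Hz : forall z, wb p z -> (z <= x0)%O -> I z) :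
  usc_at (indicator_module k I) p.
Proof.
move=> N f fl fc.
have ip : `[< I p >] by apply/asboolP.
have ix0 : `[< I x0 >] by apply/asboolP.
exists (fun v => f x0 hx0 v *m Cm `[< I x0 >] `[< I p >]); split.
- by move=> a u v /=; rewrite fl mulmxDl -scalemxAl.
- move=> x hx hpx v /=.
  have [z [hz hzx hzx0]] := Wcod x x0 hx hx0.
  rewrite -(fc z x hz hx hzx v) -(fc z x0 hz hx0 hzx0) /=.
  by rewrite !Cm_comp.
- move=> g' g'l g'c v.
  rewrite -(g'c x0 hx0 (wb_le hx0)) /= Cm_comp // Cm_id //.
Qed.

Lemma usc_neg (I : set P) p
  (Wcod : forall x y, wb p x -> wb p y -> exists z, [/\ wb p z, (z <= x)%O & (z <= y)%O])
  x1 (hx1 : wb p x1) (Ip : ~ I p)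
  (Hz : forall z, wb p z -> (z <= x1)%O -> ~ I z) :
  usc_at (indicator_module k I) p.
Proof.
move=> N f fl fc.
exists (fun _ => 0); split.
- exact: kl_zero.
- move=> x hx hpx v /=.
  have [z [hz hzx hzx1]] := Wcod x x1 hx hx1.
  rewrite -(fc z x hz hx hzx v) /= (rv0 (f z hz v)) ?mul0mx //.
  by apply/asboolPn; apply: Hz.
- move=> g' g'l g'c v.
  by rewrite (rv0 (g' v)) //; apply/asboolPn.
Qed.

Lemma usc_nec1 (I : set P) p : usc_at (indicator_module k I) p -> ~ I p ->
  (exists x, wb p x) -> exists x, wb p x /\ ~ I x.
Proof.
move=> L Ip [x0 hx0]; case: (pselect (exists x, wb p x /\ ~ I x)) => // hno.
have hall : forall x, wb p x -> `[< I x >].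
  move=> x hx; apply/asboolP; apply: contrapT => Ix; apply: hno; by exists x.
have [|g [gl gc gu]] := L 'rV[k]_(true : nat)
  (fun x _ v => v *m Cm true `[< I x >]) (fun x _ => @kl_Cm _ _ _).
  by move=> x y hx hy hxy v; apply: Cm_comp; apply: hall.
have := gc x0 hx0 (wb_le hx0) (const_mx 1).
rewrite /= (rv0 (g _)) ?mul0mx; last by apply/asboolPn.
by move/eqP; rewrite eq_sym (negbTE (@one_mul2 k _ (hall _ hx0))).
Qed.

Lemma usc_nec2 (I : set P) p : usc_at (indicator_module k I) p -> I p ->
  exists x, wb p x /\ I x.
Proof.
move=> L Ip; case: (pselect (exists x, wb p x /\ I x)) => // hno.
have ip : `[< I p >] by apply/asboolP.
have [|g [gl gc gu]] := L (indicator_module k I p) (fun x _ _ => 0)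
  (fun x _ => @kl_zero _ _ _).
  by move=> *; rewrite /= mul0mx.
have e1 := gu (fun v => v) (@kl_id _ _).
have e0 := gu (fun _ => 0) (@kl_zero _ _ _).
have c1 : forall x (hx : wb p x) (hpx : (p <= x)%O) (v : indicator_module k I p),
    pm_map (indicator_module k I) hpx v = 0.
  move=> x hx hpx v /=; rewrite (rv0 (v *m _)) //.
  by apply/asboolPn => Ix; apply: hno; exists x.
have := e1 c1 (const_mx 1); rewrite -(e0 _ (const_mx 1)); last first.
  by move=> *; rewrite /= mul0mx.
by move/eqP; rewrite (negbTE (@one_neq0 k _ ip)).
Qed.

End Poset.
Section RnSec.
Variables (R : realType) (n : nat).
Local Notation T := (Rn R n).

Lemma leRnP (x y : T) : (x <= y)%O <-> forall i, x ord0 i <= y ord0 i.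
Proof. by split => [/forallP|h]; [|apply/forallP]. Qed.

Lemma wb_suff (p x : T) : (forall i, p ord0 i < x ord0 i) -> way_below p x.
Proof.
move=> hpx D s [[d0 Dd0] Ddir] [sub sl] xs.
have claim : forall i, exists d, D d /\ p ord0 i < d ord0 i.
  move=> i; apply: contrapT => hno.
  pose u : T := \row_j (if j == i then p ord0 i else s ord0 j).
  have : (s <= u)%O.
    apply: sl => d Dd; apply/leRnP => j; rewrite mxE; case: eqP => [->|_].
      by rewrite leNgt; apply/negP => h; apply: hno; exists d.
    by have /leRnP := sub d Dd.
  move/leRnP/(_ i); rewrite mxE eqxx => si.
  have /leRnP/(_ i) := xs => xsi.
  by have := lt_le_trans (hpx i) (le_trans xsi si); rewrite ltxx.
have ind : forall m, exists d, D d /\ forall i : 'I_n, (i < m)%N -> p ord0 i <= d ord0 i.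
  elim => [|m [d [Dd hd]]]; first by exists d0.
  case: (ltnP m n) => mn.
    have [dm [Ddm hdm]] := claim (Ordinal mn).
    have [z [Dz dz dmz]] := Ddir d dm Dd Ddm.
    exists z; split => // i; rewrite ltnS leq_eqVlt => /orP [/eqP eim | lt].
      have -> : i = Ordinal mn by apply: val_inj.
      by apply: le_trans (ltW hdm) _; have /leRnP := dmz.
    by apply: le_trans (hd i lt) _; have /leRnP := dz.
  by exists d; split => // i _; apply: hd; exact: leq_trans (ltn_ord i) mn.
have [d [Dd hd]] := ind n.
by exists d => //; apply/leRnP => i; apply: hd.
Qed.

Lemma wb_nec (p x : T) : way_below p x -> forall i, p ord0 i < x ord0 i.
Proof.
move=> h i.
pose D : set T := fun y => exists2 t : R, 0 < t & y = (x : 'rV[R]_n) - const_mx t.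
have dir : directed D.
  split; first by exists ((x : 'rV[R]_n) - const_mx 1); exists 1.
  move=> _ _ [t1 t10 ->] [t2 t20 ->].
  exists ((x : 'rV[R]_n) - const_mx (Num.min t1 t2)); split.
  - by exists (Num.min t1 t2) => //; rewrite lt_min t10 t20.
  - by apply/leRnP => j; rewrite !mxE lerD2l lerN2 ge_min lexx.
  - by apply/leRnP => j; rewrite !mxE lerD2l lerN2 ge_min lexx orbT.
have sup : is_sup D x.
  split.
    move=> _ [t t0 ->]; apply/leRnP => j; rewrite !mxE.
    by rewrite lerBlDr lerDl ltW.
  move=> u hu; apply/leRnP => j; apply/ler_addgt0Pr => e e0.
  have /leRnP/(_ j) := hu ((x : 'rV[R]_n) - const_mx e) (ex_intro2 _ _ e e0 erefl).
  by rewrite !mxE lerBlDr.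
have [d [t t0 ->] pd] := h D x dir sup (lexx x).
have /leRnP/(_ i) := pd; rewrite !mxE => pdi.
by apply: le_lt_trans pdi _; rewrite ltrBlDr ltrDl.
Qed.

Lemma wb_cod (p : T) x y : way_below p x -> way_below p y ->
  exists z, [/\ way_below p z, (z <= x)%O & (z <= y)%O].
Proof.
move=> hx hy.
exists (\row_j Num.min (x ord0 j) (y ord0 j) : 'rV[R]_n); split.
- by apply: wb_suff => j; rewrite mxE lt_min !wb_nec.
- by apply/leRnP => j; rewrite mxE ge_min lexx.
- by apply/leRnP => j; rewrite mxE ge_min lexx orbT.
Qed.

Lemma wb_ex (p : T) : way_below p ((p : 'rV[R]_n) + const_mx 1).
Proof. by apply: wb_suff => j; rewrite !mxE ltrDl ltr01. Qed.

Lemma open_S (x : T) : open [set q : 'rV[R]_n | forall i, q ord0 i < x ord0 i].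
Proof.
rewrite openE => q Sq; rewrite /interior.
have fi : forall i, nbhs q [set r : 'rV[R]_n | r ord0 i < x ord0 i].
  move=> i.
  have op : open ((fun r : 'rV[R]_n => r ord0 i) @^-1` [set y | y < x ord0 i]).
    apply: (@open_comp _ _ (fun r : 'rV[R]_n => r ord0 i) [set y | y < x ord0 i]).
      by move=> r _; apply: coord_continuous.
    exact: open_lt.
  by move: op; rewrite openE => /(_ q (Sq i)).
exact: (filter_forall _ fi).
Qed.

Lemma open_above (A : set 'rV[R]_n) (p : T) : open A -> A p ->
  exists x : T, A x /\ forall i, p ord0 i < x ord0 i.
Proof.
rewrite openE => op Ap.
have := op p Ap; rewrite /interior => /nbhs_ballP [e e0 sub].
exists ((p : 'rV[R]_n) + const_mx (e / 2)); split.
  apply: sub; split => // i j; rewrite !mxE.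
  rewrite -ball_normE /= opprD addrA subrr add0r normrN.
  by rewrite gtr0_norm ?divr_gt0 // ltr_pdivrMr // ltr_pMr // ltr1n.
by move=> i; rewrite !mxE ltrDl divr_gt0.
Qed.

Lemma open_down (A : set 'rV[R]_n)
  (Ad : forall (q y : T), A y -> (q <= y)%O -> A q)
  (H : forall p : T, A p -> exists x : T, way_below p x /\ A x) : open A.
Proof.
rewrite openE => p Ap; have [x [hx Ax]] := H p Ap.
have := @open_S x; rewrite openE => /(_ p (wb_nec hx)).
move=> nS; apply: (filterS _ nS) => q Sq.
by apply: (Ad q x Ax); apply/leRnP => i; apply: ltW; apply: Sq.
Qed.
End RnSec.

Local Close Scope ring_scope.

Theorem mainTheorem9 :
  (forall (k : comNzRingType) (disp : Order.disp_t) (P : porderType disp),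
     continuous_poset P ->
     (forall U : set P, upset U ->
        (pm_lower_semicontinuous (indicator_module k U) <-> scott_open U)) /\
     (forall D : set P, downset D ->
        (pm_lower_semicontinuous (indicator_module k D) <-> scott_closed D))) /\
  (forall (k : comNzRingType) (R : realType) (n : nat),
     (forall U : set (Rn R n), upset U ->
        (pm_upper_semicontinuous (indicator_module k U) <->
         closed (U : set 'rV[R]_n))) /\
     (forall D : set (Rn R n), downset D ->
        (pm_upper_semicontinuous (indicator_module k D) <->
         open (D : set 'rV[R]_n)))).
Proof.
split.
- move=> k disp P cont.
  have Wdir p := (cont p).1; have Wsup p := (cont p).2.
  split.
  + move=> U Uup; rewrite lscE; split.
    * move=> L; split => // S s dir sup Us.
      have [x [hx Ux]] := lsc_nec1 (L s) Us.
      have [d Sd xd] := hx S s dir sup (lexx s).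
      by exists d => //; exact: Uup _ _ Ux xd.
    * move=> [_ so] p; case: (pselect (U p)) => Up.
      - have [x0 hx0 Ux0] := so _ p (Wdir p) (Wsup p) Up.
        apply: (@lsc_pos k disp P U p (Wdir p) x0 hx0 Ux0 Up) => z _ x0z.
        exact: Uup _ _ Ux0 x0z.
      - have [[x1 hx1] _] := Wdir p.
        apply: (@lsc_neg k disp P U p (Wdir p) x1 hx1 Up) => z hz _ Uz.
        by apply: Up; exact: Uup _ _ Uz (wb_le hz).
  + move=> D Ddown; rewrite lscE; split.
    * move=> L; split.
      - move=> x y nDx xy Dy; apply: nDx; exact: Ddown x y Dy xy.
      - move=> S s dir sup nDs.
        have [x [hx nDx]] := lsc_nec2 (L s) nDs (Wdir s).1.
        have [d Sd xd] := hx S s dir sup (lexx s).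
        by exists d => // Dd; apply: nDx; exact: Ddown _ _ Dd xd.
    * move=> [_ so] p; case: (pselect (D p)) => Dp.
      - have [[x0 hx0] _] := Wdir p.
        apply: (@lsc_pos k disp P D p (Wdir p) x0 hx0 (Ddown _ _ Dp (wb_le hx0)) Dp).
        by move=> z hz _; exact: Ddown _ _ Dp (wb_le hz).
      - have [x1 hx1 nDx1] := so _ p (Wdir p) (Wsup p) Dp.
        apply: (@lsc_neg k disp P D p (Wdir p) x1 hx1 Dp) => z hz x1z Dz.
        by apply: nDx1; exact: Ddown _ _ Dz x1z.
- move=> k R n; split.
  + move=> U Uup; rewrite uscE; split.
    * move=> L; rewrite -openC; apply: open_down.
      - by move=> q y nUy qy Uq; apply: nUy; exact: Uup _ _ Uq qy.
      - by move=> p nUp; exact: (@usc_nec1 k _ _ U p (L p) nUp (ex_intro _ _ (@wb_ex R n p))).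
    * move=> cU p; case: (pselect (U p)) => Up.
      - apply: (@usc_pos k _ _ U p (@wb_cod R n p) _ (@wb_ex R n p)
          (Uup _ _ Up (wb_le (@wb_ex R n p))) Up).
        by move=> z hz _; exact: Uup _ _ Up (wb_le hz).
      - have [x1 [nUx1 hx1]] := open_above (closed_openC cU) Up.
        apply: (@usc_neg k _ _ U p (@wb_cod R n p) x1 (wb_suff hx1) Up).
        by move=> z hz zx1 Uz; apply: nUx1; exact: Uup _ _ Uz zx1.
  + move=> D Ddown; rewrite uscE; split.
    * move=> L; apply: open_down.
      - by move=> q y Dy qy; exact: Ddown _ _ Dy qy.
      - by move=> p Dp; exact: (@usc_nec2 k _ _ D p (L p) Dp).
    * move=> oD p; case: (pselect (D p)) => Dp.
      - have [x0 [Dx0 hx0]] := open_above oD Dp.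
        apply: (@usc_pos k _ _ D p (@wb_cod R n p) x0 (wb_suff hx0) Dx0 Dp).
        by move=> z hz zx0; exact: Ddown _ _ Dx0 zx0.
      - apply: (@usc_neg k _ _ D p (@wb_cod R n p) _ (@wb_ex R n p) Dp).
        by move=> z hz _ Dz; apply: Dp; exact: Ddown _ _ Dz (wb_le hz).
Qed.
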